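(* Let $n_1,n_2\ge2$ and let $s$ be an integer with $1\le s\le n_2/2$. Then there exists a subset $\Omega\subset\{0,1\}^s_{n_1\times n_2}$ such that, for a numerical constant $C\ge 10^{-5}$, $$\log|\Omega|\ge C\,n_1\,s\,\log\Big(\frac{e\,n_2}{s}\Big),$$ and for any two distinct $A,A'\in\Omega$, $\ d_H(A,A')\ge \dfrac{n_1(s+1)}{16}$.
   Context: $\{0,1\}^s_{n_1\times n_2}$ denotes the set of all matrices $A=(a_{ij})\in\mathbb R^{n_1\times n_2}$ with $a_{ij}\in\{0,1\}$ such that each row of $A$ contains exactly $s$ ones. For $A=(a_{ij}),A'=(a'_{ij})$ in this set, the Hamming distance is $d_H(A,A')=\sum_{i=1}^{n_1}\sum_{j=1}^{n_2}\mathbb I(a_{ij}\ne a'_{ij})$. *)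

(* Defs.v *)
From mathcomp Require Import all_boot all_order all_algebra.
From Stdlib Require Import Reals.
Set Implicit Arguments. Unset Strict Implicit. Unset Printing Implicit Defensive.

(* {0,1}^s_{n1 x n2}: 0/1 matrices (entries encoded as bool, true = 1)
   with exactly s ones in each row. *)
Definition row_s_sparse (n1 n2 s : nat) (A : 'M[bool]_(n1, n2)) : bool :=
  [forall i : 'I_n1, #|[set j : 'I_n2 | A i j]| == s].

Definition dH (n1 n2 : nat) (A A' : 'M[bool]_(n1, n2)) : nat :=
  #|[set ij : 'I_n1 * 'I_n2 | A ij.1 ij.2 != A' ij.1 ij.2]|.

(* Main.v *)
Require Import Defs.
From mathcomp Require Import all_boot all_order all_algebra.
From Stdlib Require Import Reals.
From mathcomp Require Import zify.
From Stdlib Require Import Lra.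
Notation "m ^ n" := (expn m n) : nat_scope.
Set Implicit Arguments. Unset Strict Implicit. Unset Printing Implicit Defensive.
Lemma gv (T : finType) (d : T -> T -> nat) (N : nat) :
  (forall x y, d x y = d y x) -> (forall x, d x x = 0) -> 0 < N ->
  exists O : {set T},
    (forall a b, a \in O -> b \in O -> a != b -> N <= 8 * d a b) /\
    (#|T| <= \sum_(a in O) #|[set g | 8 * d a g < N]|).
Proof.
move=> dsym d0 N0.
pose P (O : {set T}) := [forall a in O, forall b in O, (a != b) ==> (N <= 8 * d a b)].
have [O mO] : {O | maxset P O}.
  apply: ex_maxset; exists set0; apply/forall_inP => a; by rewrite inE.
have PO := maxsetp mO.
exists O; split.
  move=> a b aO bO ab.
  by move/forall_inP: PO => /(_ a aO) /forall_inP /(_ b bO) /implyP; apply.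
have cov : forall g, exists2 a, a \in O & 8 * d a g < N.
  move=> g; case: (boolP (g \in O)) => gO.
    by exists g => //; rewrite d0 muln0.
  case: (pickP (fun a => (a \in O) && (8 * d a g < N))) => [a /andP[] aO ag | H0].
    by exists a.
  have H : forall a, (a \in O) ==> ~~ (8 * d a g < N).
    by move=> a; move: (H0 a); case: (a \in O) => //= ->.
  exfalso.
  have PB : P (g |: O).
    apply/forall_inP => a; rewrite !inE => /orP aO.
    apply/forall_inP => b; rewrite !inE => /orP bO; apply/implyP => ab.
    move/forall_inP: PO => PO.
    case: aO => [/eqP ? | aO]; case: bO => [/eqP ? | bO]; subst.
    - by rewrite eqxx in ab.

    - by move: (H b); rewrite bO /= -leqNgt dsym.
    - by move: (H a); rewrite aO /= -leqNgt.
    - by move/forall_inP: (PO a aO) => /(_ b bO) /implyP; apply.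
  have := maxsetsup mO PB (subsetUr _ _).
  move/setP => /(_ g); rewrite !inE eqxx /= => E.
  by rewrite -E in gO.
rewrite -sum1_card.
have E : forall a, #|[set g | 8 * d a g < N]| = \sum_g ((8 * d a g < N) : nat).
  move=> a; rewrite -sum1dep_card big_mkcond /=.
  by apply: eq_bigr => g _; case: ifP.
rewrite (eq_bigr _ (fun a _ => E a)).
rewrite exchange_big /=; apply: leq_sum => g _.
have [a aO ag] := cov g.
by rewrite (bigD1 a) //= ag leq_addr.
Qed.
Definition dw (P : finType) (m : nat) (f g : {ffun P -> 'I_m}) :=
  #|[set p | f p != g p]|.

Lemma ball_bound (P : finType) (m : nat) (f : {ffun P -> 'I_m}) : 0 < m ->
  #|[set g : {ffun P -> 'I_m} | 8 * dw f g < #|P|]| ^ 8 * (7 * m) ^ (7 * #|P|)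
    <= (8 * m) ^ (8 * #|P|).
Proof.
move=> m0.
set N := #|P|; set B := [set g | _].
pose w (g : {ffun P -> 'I_m}) := \prod_p (if g p == f p then 7 * m else 1).
have S : \sum_g w g <= (8 * m)^N.
  rewrite /w -(bigA_distr_bigA (fun p r => if r == f p then 7 * m else 1)) /=.
  rewrite /N -prod_nat_const; apply: leq_prod => p _.
  rewrite (bigD1 (f p)) //= eqxx.
  rewrite (eq_bigr (fun _ => 1)); last by move=> r /negbTE ->.
  rewrite sum1dep_card.
  apply: leq_trans (leq_add (leqnn _) (max_card _)) _; rewrite card_ord; lia.
have W : forall g, g \in B -> (7 * m)^(N - N %/ 8) <= w g.
  move=> g; rewrite inE => gB.
  rewrite /w -big_mkcond /= prod_nat_const.
  apply: leq_pexp2l; first lia.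
  have := cardsC [set p | f p != g p].
  have -> : ~: [set p | f p != g p] = [set p | g p == f p].
    by apply/setP => p; rewrite !inE negbK eq_sym.
  move: gB; rewrite /dw /N.
  have -> : #|[pred p | g p == f p]| = #|[set p | g p == f p]| by rewrite cardsE.
  move: #|[set p | f p != g p]| #|[set p | g p == f p]| #|P| => a b n.
  lia.
have BW : #|B| * (7 * m)^(N - N %/ 8) <= (8 * m)^N.
  apply: (leq_trans _ S).
  rewrite -sum_nat_const [X in _ <= X](bigID (mem B)) /=.
  apply: (leq_trans _ (leq_addr _ _)); exact: leq_sum.
have H : (#|B| * (7 * m)^(N - N %/ 8)) ^ 8 <= ((8 * m)^N) ^ 8 by rewrite leq_exp2r.
rewrite expnMn -!expnM in H.
rewrite [8 * N]mulnC; apply: (leq_trans _ H); rewrite leq_mul2l; apply/orP; right.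
apply: leq_pexp2l; first by clear -m0; lia.
by rewrite /N; move: #|P| => n; clear; lia.
Qed.

Lemma code_exists (P : finType) (m : nat) : 2 <= m -> 0 < #|P| ->
  exists O : {set {ffun P -> 'I_m}},
    (forall a b, a \in O -> b \in O -> a != b -> #|P| <= 8 * dw a b) /\
    m ^ #|P| <= #|O| ^ 8.
Proof.
move=> m2 P0.
have [O [HO Hc]] := @gv {ffun P -> 'I_m} (@dw P m) #|P|
  (fun x y => ltac:(rewrite /dw; apply: eq_card => p; rewrite !inE eq_sym //))
  (fun x => ltac:(rewrite /dw; apply/eqP; rewrite cards_eq0; apply/eqP/setP => p; rewrite !inE eqxx //))
  P0.
exists O; split => //.
set N := #|P|.
pose M := \max_(a : {ffun P -> 'I_m}) #|[set g | 8 * dw a g < N]|.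
have T0 : 0 < #|{ffun P -> 'I_m}| by rewrite card_ffun card_ord expn_gt0; lia.
have [a0 Ma0] := eq_bigmax (fun a : {ffun P -> 'I_m} => #|[set g | 8 * dw a g < N]|) T0.
have H1 : m ^ N <= #|O| * M.
  have -> : m ^ N = #|{ffun P -> 'I_m}| by rewrite card_ffun card_ord.
  rewrite -sum_nat_const.
  apply: (leq_trans Hc); apply: leq_sum => a _; exact: leq_bigmax.
have H2 : (m ^ N) ^ 8 * (7 * m) ^ (7 * N) <= #|O| ^ 8 * (8 * m) ^ (8 * N).
  have := ball_bound a0 (ltnW m2); rewrite -/N -Ma0 => HB.
  have H1' : (m ^ N) ^ 8 <= (#|O| * M) ^ 8 by rewrite leq_exp2r.
  rewrite expnMn in H1'.
  apply: leq_trans (leq_mul H1' (leqnn _)) _.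
  by rewrite -mulnA leq_mul2l HB orbT.
have H3 : m ^ N * (8 * m) ^ (8 * N) <= (m ^ N) ^ 8 * (7 * m) ^ (7 * N).
  have E1 : m ^ N * (8 * m) ^ (8 * N) = (m * (8 * m) ^ 8) ^ N.
    by rewrite [RHS]expnMn -expnM.

  have E2 : (m ^ N) ^ 8 * (7 * m) ^ (7 * N) = (m ^ 8 * (7 * m) ^ 7) ^ N.
    by rewrite [RHS]expnMn -!expnM (mulnC N 8).
  rewrite E1 E2 leq_exp2r // !expnMn.
  have hc : 8 ^ 8 <= 7 ^ 7 * 2 ^ 6 by lia.
  move: (8 ^ 8) (7 ^ 7) hc => b a hc.
  have hk : 2 ^ 6 <= m ^ 6 by rewrite leq_exp2r.
  have -> : m ^ 8 * (a * m ^ 7) = a * m ^ 6 * m ^ 9.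
    by rewrite mulnCA -mulnA -!expnD.
  have -> : m * (b * m ^ 8) = b * m ^ 9 by rewrite mulnCA -expnS.
  move: (m ^ 6) (m ^ 9) (2 ^ 6) hk hc => k x t hk hc.
  rewrite leq_mul2r; apply/orP; right; clear -hk hc; nia.
have := leq_trans H3 H2.
rewrite leq_pmul2r //; rewrite expn_gt0; clear -m2; lia.
Qed.
Lemma pos_lt (n2 s : nat) (b : 'I_s) (r : 'I_(n2 %/ s)) : b * (n2 %/ s) + r < n2.
Proof.
have hb := ltn_ord b; have hr := ltn_ord r.
have h1 : b.+1 * (n2 %/ s) <= s * (n2 %/ s) by rewrite leq_mul2r hb orbT.
have h2 : s * (n2 %/ s) <= n2 by rewrite mulnC leq_divM.
move: h1 h2 hr; rewrite mulSn; move: (nat_of_ord r) => rr; clear r.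
move: (n2 %/ s) (b * (n2 %/ s)) => m x; lia.
Qed.

Definition posO (n2 s : nat) (b : 'I_s) (r : 'I_(n2 %/ s)) : 'I_n2 :=
  Ordinal (pos_lt b r).

Lemma posO_inj (n2 s : nat) (b b' : 'I_s) (r r' : 'I_(n2 %/ s)) :
  posO b r = posO b' r' -> b = b' /\ r = r'.
Proof.
move=> /(congr1 (@nat_of_ord _)) /= E.
have m0 : 0 < n2 %/ s by case: (n2 %/ s) r {E} => [[]|].
have hr := ltn_ord r; have hr' := ltn_ord r'.
have Eb : (b : nat) = b'.
  have := congr1 (divn^~ (n2 %/ s)) E.
  by rewrite /= !divnMDl // !divn_small // !addn0.
have Er : (r : nat) = r' by rewrite Eb in E; apply: (addnI E).
by split; apply: val_inj.
Qed.

Definition enc (n1 n2 s : nat) (f : {ffun 'I_n1 * 'I_s -> 'I_(n2 %/ s)}) : 'M[bool]_(n1, n2) :=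
  \matrix_(i, j) [exists b : 'I_s, j == posO b (f (i, b))].

Lemma enc_sparse (n1 n2 s : nat) (f : {ffun 'I_n1 * 'I_s -> 'I_(n2 %/ s)}) :
  row_s_sparse s (enc f).
Proof.
apply/forallP => i.
have -> : [set j | enc f i j] = [set posO b (f (i, b)) | b : 'I_s].
  apply/setP => j; rewrite !inE mxE.
  apply/existsP/imsetP => [[b /eqP ->]|[b _ ->]]; by exists b.
rewrite card_imset ?card_ord //.
by move=> b b' /posO_inj [].
Qed.

Lemma enc_dist (n1 n2 s : nat) (f g : {ffun 'I_n1 * 'I_s -> 'I_(n2 %/ s)}) :
  dw f g <= dH (enc f) (enc g).
Proof.
pose h (p : 'I_n1 * 'I_s) := (p.1, posO p.2 (f p)).
have hinj : injective h.
  move=> [i b] [i' b'] E.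
  have /= Ei := congr1 fst E.
  have /= /posO_inj [Eb _] := congr1 snd E.
  by rewrite Ei Eb.
rewrite /dw /dH -(card_imset _ hinj); apply: subset_leq_card.
apply/subsetP => x /imsetP [[i b] Hp ->]; move: Hp; rewrite !inE /= !mxE => Hfg.
have -> : [exists b0, posO b (f (i, b)) == posO b0 (f (i, b0))].
  by apply/existsP; exists b.
apply/negP => /eqP/esym/existsP [b' /eqP /posO_inj [Eb Er]].
by subst b'; rewrite Er eqxx in Hfg.
Qed.

Lemma enc_inj (n1 n2 s : nat) : injective (@enc n1 n2 s).
Proof.
move=> f g E; have := enc_dist f g; rewrite E.
have -> : dH (enc g) (enc g) = 0.
  by apply/eqP; rewrite cards_eq0; apply/eqP/setP => x; rewrite !inE eqxx.
rewrite leqn0 cards_eq0 => /eqP /setP H.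
apply/ffunP => p; move: (H p); rewrite !inE => /negbFE /eqP //.
Qed.
Lemma ln_le' (x y : R) : (0 < x)%R -> (x <= y)%R -> (ln x <= ln y)%R.
Proof.
move=> x0 [xy|->]; last by apply: Rle_refl.
by apply: Rlt_le; apply: ln_increasing.
Qed.

Lemma INR_expn (m n : nat) : INR (m ^ n) = (INR m ^ n)%R.
Proof.
elim: n => [|n IH]; first by rewrite expn0.
by rewrite expnS -multE mult_INR IH.
Qed.

Lemma INR_muln (m n : nat) : INR (m * n) = (INR m * INR n)%R.
Proof. by rewrite -multE mult_INR. Qed.

Lemma INR_leq (m n : nat) : m <= n -> (INR m <= INR n)%R.
Proof. by move/leP; apply: le_INR. Qed.

Lemma real_part (n1 n2 s m K : nat) :
  2 <= m -> 1 <= s -> 3 * n2 <= s * m ^ 4 -> 1 <= n2 ->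
  m ^ (n1 * s) <= K ^ 8 ->
  (ln (INR K) >= 1e-5 * INR n1 * INR s * ln (exp 1 * INR n2 / INR s))%R.
Proof.
move=> m2 s1 hn2 n21 hK.
have K1 : 1 <= K.
  case: K hK => //; rewrite exp0n // leqn0 => /eqP; move: (expn_gt0 m (n1 * s)); lia.
have Rm : (2 <= INR m)%R by apply: (INR_leq m2).
have Rs : (1 <= INR s)%R by apply: (INR_leq s1).
have Rn2 : (1 <= INR n2)%R by apply: (INR_leq n21).
have Rn1 : (0 <= INR n1)%R by apply: pos_INR.
have RK : (1 <= INR K)%R by apply: (INR_leq K1).
have hR : (INR (n1 * s) * ln (INR m) <= 8 * ln (INR K))%R.
  have := INR_leq hK; rewrite !INR_expn => H.
  rewrite -(ln_pow _ _ (n1 * s)); last lra.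
  rewrite (_ : 8%R = INR 8); last by simpl; lra.
  rewrite -ln_pow; last lra.
  apply: ln_le' => //; apply: pow_lt; lra.
have hY : (ln (exp 1 * INR n2 / INR s) <= 4 * ln (INR m))%R.
  rewrite (_ : 4%R = INR 4); last by simpl; lra.
  rewrite -ln_pow; last lra.
  have e3 := exp_le_3; have e0 : (0 < exp 1)%R by apply: exp_pos.
  have H := INR_leq hn2; rewrite (INR_muln s) INR_expn (INR_muln 3) in H.
  rewrite (_ : INR 3 = 3%R) in H; last by simpl; lra.
  apply: ln_le'.
    apply: Rdiv_lt_0_compat; last lra; apply: Rmult_lt_0_compat; lra.
  unfold Rdiv; apply: (Rmult_le_reg_r (INR s)); first lra.
  rewrite Rmult_assoc Rinv_l; last lra.
  rewrite Rmult_1_r.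
  have : (exp 1 * INR n2 <= 3 * INR n2)%R by apply: Rmult_le_compat_r; lra.
  lra.
have L0 : (0 <= ln (INR m))%R by rewrite -ln_1; apply: ln_le'; lra.
rewrite INR_muln in hR.
have X0 : (0 <= INR n1 * INR s)%R by apply: Rmult_le_pos; lra.
have XY : (INR n1 * INR s * ln (exp 1 * INR n2 / INR s) <=
           INR n1 * INR s * (4 * ln (INR m)))%R by apply: Rmult_le_compat_l.
have XL : (0 <= INR n1 * INR s * ln (INR m))%R by apply: Rmult_le_pos.
lra.
Qed.

Theorem lemma1 :
  exists C : R, (C >= 1e-5)%R /\
  forall (n1 n2 s : nat),
    (2 <= n1)%N -> (2 <= n2)%N -> (1 <= s)%N -> (2 * s <= n2)%N ->
    exists Omega : {set 'M[bool]_(n1, n2)},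
      (forall A, A \in Omega -> row_s_sparse s A) /\
      (ln (INR #|Omega|) >= C * INR n1 * INR s * ln (exp 1 * INR n2 / INR s))%R /\
      (forall A A', A \in Omega -> A' \in Omega -> A != A' ->
         (INR (dH A A') >= INR (n1 * (s + 1)) / 16)%R).
Proof.
exists 1e-5%R; split; first by apply: Rge_refl.
move=> n1 n2 s h1 h2 hs hs2.
have s0 : 0 < s by [].
have m2 : 2 <= n2 %/ s by rewrite leq_divRL //; lia.
have P0 : 0 < #|{: 'I_n1 * 'I_s}| by rewrite card_prod !card_ord muln_gt0; lia.
have [O [HO Hc]] := @code_exists _ (n2 %/ s) m2 P0.
rewrite card_prod !card_ord in HO Hc.
exists (@enc n1 n2 s @: O).
split; [|split].
- by move=> A /imsetP [f _ ->]; apply: enc_sparse.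
- rewrite card_imset; last exact: enc_inj.
  apply: (real_part (m := n2 %/ s)) => //; last lia.
  have hc := ltn_ceil n2 s0.
  have h4 : 3 * (n2 %/ s).+1 <= (n2 %/ s) ^ 4.
    rewrite !expnS expn0 muln1.
    move: (n2 %/ s) m2 => k k2; clear -k2.
    have e1 : 2 * k <= k * k := leq_mul k2 (leqnn k).
    have e2 : 2 * (k * k) <= k * (k * k) := leq_mul k2 (leqnn _).
    have e3 : 2 * (k * (k * k)) <= k * (k * (k * k)) := leq_mul k2 (leqnn _).
    lia.
  move: (n2 %/ s) hc h4 => k hc h4; clear -hc h4.
  have e : 3 * (k.+1 * s) <= k ^ 4 * s by rewrite mulnA leq_mul2r h4 orbT.
  lia.
- move=> A A' /imsetP [a aO ->] /imsetP [b bO ->] ne.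
  have ab : a != b by apply: contraNneq ne => ->.
  have := HO a b aO bO ab; have := enc_dist a b.
  move: (dH (enc a) (enc b)) (dw a b) => D w hD hw.
  have : n1 * (s + 1) <= 16 * D.
    have e : n1 <= n1 * s by rewrite leq_pmulr.
    rewrite mulnDr muln1; clear -e hD hw; lia.
  move/INR_leq; rewrite INR_muln (INR_muln 16).
  rewrite (_ : INR 16 = 16%R); last by simpl; lra.
  move=> H; apply: Rle_ge.
  rewrite (_ : (INR n1 * INR (s + 1) / 16 = (INR n1 * INR (s + 1)) * / 16)%R) //.
  lra.
Qed.
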